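(* There exists a compact metrizable abelian group $K$ having a countable dense subgroup $G$ which, in the subspace topology, is not $g$-reversible.
   Context: All topological groups are assumed Hausdorff. A topological group $G$ is called $g$-reversible if every continuous automorphism of $G$ (i.e. every continuous group isomorphism of $G$ onto itself) is an open map. *)

(* Defs.v *)
From Stdlib Require Import Reals List.
Open Scope R_scope.

Section TopDefs.
Variable T : Type.

Definition is_topology (op : (T -> Prop) -> Prop) : Prop :=
  op (fun _ => True) /\
  (forall U V, op U -> op V -> op (fun x => U x /\ V x)) /\
  (forall F : (T -> Prop) -> Prop, (forall U, F U -> op U) ->
      op (fun x => exists U, F U /\ U x)).

Definition hausdorff (op : (T -> Prop) -> Prop) : Prop :=
  forall x y, x <> y -> exists U V, op U /\ op V /\ U x /\ V y /\
    (forall z, U z -> V z -> False).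

Definition compact_space (op : (T -> Prop) -> Prop) : Prop :=
  forall F : (T -> Prop) -> Prop, (forall U, F U -> op U) ->
    (forall x, exists U, F U /\ U x) ->
    exists l : list (T -> Prop), (forall U, In U l -> F U) /\
      (forall x, exists U, In U l /\ U x).

Definition is_metric (d : T -> T -> R) : Prop :=
  (forall x y, 0 <= d x y) /\ (forall x y, d x y = 0 <-> x = y) /\
  (forall x y, d x y = d y x) /\ (forall x y z, d x z <= d x y + d y z).

Definition metric_open (d : T -> T -> R) (U : T -> Prop) : Prop :=
  forall x, U x -> exists eps, 0 < eps /\ forall y, d x y < eps -> U y.

Definition metrizable (op : (T -> Prop) -> Prop) : Prop :=
  exists d, is_metric d /\ forall U, op U <-> metric_open d U.

Definition dense (op : (T -> Prop) -> Prop) (S : T -> Prop) : Prop :=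
  forall U, op U -> (exists x, U x) -> exists x, U x /\ S x.

Definition countable_set (S : T -> Prop) : Prop :=
  exists f : nat -> T, forall x, S x <-> exists n, f n = x.

Definition is_abgroup (z : T) (add : T -> T -> T) (opp : T -> T) : Prop :=
  (forall x y w, add x (add y w) = add (add x y) w) /\
  (forall x y, add x y = add y x) /\
  (forall x, add z x = x) /\
  (forall x, add (opp x) x = z).

Definition is_subgroup (z : T) (add : T -> T -> T) (opp : T -> T)
  (S : T -> Prop) : Prop :=
  S z /\ (forall x y, S x -> S y -> S (add x y)) /\ (forall x, S x -> S (opp x)).

Definition prod_open (op : (T -> Prop) -> Prop) (W : T * T -> Prop) : Prop :=
  forall p, W p -> exists U V, op U /\ op V /\ U (fst p) /\ V (snd p) /\
    (forall x y, U x -> V y -> W (x, y)).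

Definition is_topgroup (z : T) (add : T -> T -> T) (opp : T -> T)
  (op : (T -> Prop) -> Prop) : Prop :=
  is_abgroup z add opp /\ is_topology op /\
  (forall W, op W -> prod_open op (fun p => W (add (fst p) (snd p)))) /\
  (forall W, op W -> op (fun x => W (opp x))).

Definition continuous_map (op : (T -> Prop) -> Prop) (f : T -> T) : Prop :=
  forall U, op U -> op (fun x => U (f x)).

Definition open_map (op : (T -> Prop) -> Prop) (f : T -> T) : Prop :=
  forall U, op U -> op (fun y => exists x, U x /\ f x = y).

Definition bijective_map (f : T -> T) : Prop :=
  (forall x y, f x = f y -> x = y) /\ (forall y, exists x, f x = y).

Definition additive_map (add : T -> T -> T) (f : T -> T) : Prop :=
  forall x y, f (add x y) = add (f x) (f y).

Definition g_reversible (add : T -> T -> T) (op : (T -> Prop) -> Prop) : Prop :=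
  forall f : T -> T, bijective_map f -> additive_map add f ->
    continuous_map op f -> open_map op f.

End TopDefs.

Definition sub_zero {T} (S : T -> Prop) (z : T) (Hz : S z) : {x | S x} :=
  exist S z Hz.
Definition sub_add {T} (S : T -> Prop) (add : T -> T -> T)
  (Hadd : forall x y, S x -> S y -> S (add x y)) : {x | S x} -> {x | S x} -> {x | S x} :=
  fun a b => exist S (add (proj1_sig a) (proj1_sig b))
                     (Hadd _ _ (proj2_sig a) (proj2_sig b)).
Definition sub_opp {T} (S : T -> Prop) (opp : T -> T)
  (Hopp : forall x, S x -> S (opp x)) : {x | S x} -> {x | S x} :=
  fun a => exist S (opp (proj1_sig a)) (Hopp _ (proj2_sig a)).
Definition subspace {T} (op : (T -> Prop) -> Prop) (S : T -> Prop)
  : ({x | S x} -> Prop) -> Prop :=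
  fun V => exists U, op U /\ forall a : {x | S x}, V a <-> U (proj1_sig a).

(* Main.v *)
Require Import Defs.
From Stdlib Require Import Reals List Lra Lia Arith Bool.
From Stdlib Require Import ConstructiveEpsilon ClassicalEpsilon Classical FunctionalExtensionality ProofIrrelevance.
Open Scope R_scope.

Definition Kt := nat -> bool.
Definition agree (n : nat) (x y : Kt) : Prop := forall k, (k < n)%nat -> x k = y k.
Definition copen (U : Kt -> Prop) : Prop :=
  forall x, U x -> exists n, forall y, agree n x y -> U y.

Definition diffP (x y : Kt) (k : nat) : Prop := x k <> y k.
Lemma diffP_dec x y : forall n, {diffP x y n} + {~ diffP x y n}.
Proof. intro n; unfold diffP; destruct (bool_dec (x n) (y n)); auto. Qed.

Definition dist (x y : Kt) : R :=
  match excluded_middle_informative (exists k, diffP x y k) with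
  | left H => (/2) ^ (proj1_sig (epsilon_smallest _ (diffP_dec x y) H))
  | right _ => 0
  end.

Lemma dist_spec x y : (x = y /\ dist x y = 0) \/
  exists m, x m <> y m /\ (forall j, (j < m)%nat -> x j = y j) /\ dist x y = (/2)^m.
Proof.
  unfold dist. destruct excluded_middle_informative as [H|H].
  - right. destruct (epsilon_smallest _ (diffP_dec x y) H) as [m [Hm Hmin]]; simpl.
    exists m; split; [exact Hm| split; auto].
    intros j Hj. destruct (bool_dec (x j) (y j)); auto. specialize (Hmin j n). lia.
  - left. split; auto. apply functional_extensionality. intro k.
    destruct (bool_dec (x k) (y k)); auto. exfalso; apply H; exists k; exact n.
Qed.

Lemma pow_half_mono : forall k d, (/2)^(k+d) <= (/2)^k.
Proof.
  intros k d; induction d.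
  - rewrite Nat.add_0_r; lra.
  - replace (k + S d)%nat with (S (k+d)) by lia. simpl.
    assert (0 <= (/2)^(k+d)) by (apply pow_le; lra). lra.
Qed.
Lemma pow_half_le : forall k n, (k <= n)%nat -> (/2)^n <= (/2)^k.
Proof. intros k n H. replace n with (k + (n-k))%nat by lia. apply pow_half_mono. Qed.
Lemma pow_half_pos : forall k, 0 < (/2)^k.
Proof. intro; apply pow_lt; lra. Qed.
Lemma pow_half_lt : forall k n, (k < n)%nat -> (/2)^n < (/2)^k.
Proof. intros k n H. apply Rle_lt_trans with ((/2)^(S k)); [apply pow_half_le; lia|].
  change ((/2)^(S k)) with (/2 * (/2)^k). pose proof (pow_half_pos k). lra. Qed.

Lemma dist_ge x y k : x k <> y k -> (/2)^k <= dist x y.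
Proof.
  intro H. destruct (dist_spec x y) as [[-> _]|[m [Hm [Hj ->]]]]; [congruence|].
  apply pow_half_le. destruct (Nat.lt_ge_cases k m); auto. specialize (Hj k); intuition.
Qed.
Lemma dist_le n x y : agree n x y -> dist x y <= (/2)^n.
Proof.
  intro H. destruct (dist_spec x y) as [[_ ->]|[m [Hm [Hj ->]]]].
  - left; apply pow_half_pos.
  - apply pow_half_le. destruct (Nat.lt_ge_cases m n); auto. specialize (H m); intuition.
Qed.
Lemma dist_nonneg x y : 0 <= dist x y.
Proof. destruct (dist_spec x y) as [[_ ->]|[m [_ [_ ->]]]]; [lra| left; apply pow_half_pos]. Qed.

Lemma dist_metric : is_metric Kt dist.
Proof.
  split; [exact dist_nonneg|]. split; [|split].
  - intros x y; split.
    + intro H. destruct (dist_spec x y) as [[? _]|[m [_ [_ E]]]]; auto.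
      pose proof (pow_half_pos m); lra.
    + intros ->. destruct (dist_spec y y) as [[_ ?]|[m [Hm _]]]; auto; congruence.
  - intros x y. destruct (dist_spec x y) as [[-> E]|[m [Hm [Hj E]]]].
    + destruct (dist_spec y y) as [[_ E']|[m [Hm _]]]; [lra|congruence].
    + destruct (dist_spec y x) as [[-> _]|[m' [Hm' [Hj' E']]]]; [congruence|].
      rewrite E, E'. f_equal. destruct (Nat.lt_total m m') as [h|[h|h]]; auto.
      * exfalso; apply Hm; symmetry; auto.
      * exfalso; apply Hm'; symmetry; auto.
  - intros x y z. destruct (dist_spec x z) as [[_ ->]|[m [Hm [_ ->]]]].
    + pose proof (dist_nonneg x y); pose proof (dist_nonneg y z); lra.
    + pose proof (dist_nonneg x y); pose proof (dist_nonneg y z).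
      destruct (bool_dec (x m) (y m)) as [e|e].
      * assert (y m <> z m) by congruence. pose proof (dist_ge _ _ _ H1); lra.
      * pose proof (dist_ge _ _ _ e); lra.
Qed.

Lemma small_pow : forall eps, 0 < eps -> exists n, (/2)^n < eps.
Proof.
  intros eps He. destruct (pow_lt_1_zero (/2)) with (y := eps) as [N HN]; auto.
  rewrite Rabs_right; lra. exists N. specialize (HN N (le_n _)).
  rewrite Rabs_right in HN; auto. left; apply pow_half_pos.
Qed.

Lemma copen_metric U : copen U <-> metric_open Kt dist U.
Proof.
  split.
  - intros H x Ux. destruct (H x Ux) as [n Hn]. exists ((/2)^n). split; [apply pow_half_pos|].
    intros y Hy. apply Hn. intros k Hk. destruct (bool_dec (x k) (y k)); auto.
    pose proof (dist_ge _ _ _ n0). pose proof (pow_half_lt _ _ Hk). lra.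
  - intros H x Ux. destruct (H x Ux) as [eps [He Hb]]. destruct (small_pow eps He) as [n Hn].
    exists n. intros y Hy. apply Hb. pose proof (dist_le _ _ _ Hy). lra.
Qed.

Definition kz : Kt := fun _ => false.
Definition kadd (x y : Kt) : Kt := fun n => xorb (x n) (y n).
Definition kopp (x : Kt) : Kt := x.

Lemma agree_trans n x y w : agree n x y -> agree n y w -> agree n x w.
Proof. intros H1 H2 k Hk; rewrite H1, H2; auto. Qed.
Lemma agree_sym n x y : agree n x y -> agree n y x.
Proof. intros H k Hk; rewrite H; auto. Qed.
Lemma agree_mono n m x y : (m <= n)%nat -> agree n x y -> agree m x y.
Proof. intros Hm H k Hk; apply H; lia. Qed.
Lemma cyl_open x n : copen (agree n x).
Proof. intros y Hy. exists n. intros w Hw. eapply agree_trans; eauto. Qed.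

Lemma topgroup : is_topgroup Kt kz kadd kopp copen.
Proof.
  split; [|split; [|split]].
  - split; [|split; [|split]]; intros; apply functional_extensionality; intro n;
      unfold kadd, kz, kopp.
    + destruct (x n), (y n), (w n); reflexivity.
    + destruct (x n), (y n); reflexivity.
    + destruct (x n); reflexivity.
    + destruct (x n); reflexivity.
  - split; [|split].
    + intros x _. exists 0%nat; auto.
    + intros U V HU HV x [Ux Vx]. destruct (HU x Ux) as [n Hn]; destruct (HV x Vx) as [m Hm].
      exists (Nat.max n m). intros y Hy; split; [apply Hn|apply Hm];
        apply (agree_mono (Nat.max n m)); auto; lia.
    + intros F HF x [U [FU Ux]]. destruct (HF U FU x Ux) as [n Hn]. exists n.
      intros y Hy; exists U; auto.
  - intros W HW [x y] Wp. simpl in Wp. destruct (HW _ Wp) as [n Hn].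
    exists (agree n x), (agree n y). split; [apply cyl_open|]. split; [apply cyl_open|].
    split; [intros k; auto|]. split; [intros k; auto|].
    intros x' y' H1 H2. simpl. apply Hn. intros k Hk. unfold kadd. rewrite H1, H2; auto.
  - intros W HW. exact HW.
Qed.

Lemma haus : hausdorff Kt copen.
Proof.
  intros x y Hxy. assert (exists k, x k <> y k) as [k Hk].
  { apply NNPP; intro H. apply Hxy. apply functional_extensionality; intro k.
    apply NNPP; intro H'. apply H; eauto. }
  exists (agree (S k) x), (agree (S k) y). split; [apply cyl_open|]. split; [apply cyl_open|].
  split; [intros j; auto|]. split; [intros j; auto|].
  intros w H1 H2. apply Hk. rewrite (H1 k), (H2 k); auto.
Qed.

Definition ext (x : Kt) (n : nat) (b : bool) : Kt := fun k => if Nat.eqb k n then b else x k.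
Lemma agree_ext x n b : agree n x (ext x n b).
Proof. intros k Hk; unfold ext. destruct (Nat.eqb_spec k n); [lia|auto]. Qed.

Lemma compact : compact_space Kt copen.
Proof.
  intros F HF Hcov. apply NNPP; intro Hno.
  set (good := fun x n => exists l : list (Kt -> Prop), (forall U, In U l -> F U) /\
       forall y, agree n x y -> exists U, In U l /\ U y).
  assert (step : forall x n, ~ good x n -> ~ good (ext x n false) (S n) \/ ~ good (ext x n true) (S n)).
  { intros x n Hb. apply NNPP; intro H. apply Hb.
    apply not_or_and in H as [H1 H2]. apply NNPP in H1; apply NNPP in H2.
    destruct H1 as [l1 [F1 C1]], H2 as [l2 [F2 C2]]. exists (l1 ++ l2). split.
    - intros U HU; apply in_app_or in HU as [|]; auto.
    - intros y Hy. assert (Ha' : forall b, y n = b -> agree (S n) (ext x n b) y).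
      { intros b Hb' k Hk. unfold ext. destruct (Nat.eqb_spec k n); subst; auto. apply Hy; lia. }
      destruct (y n) eqn:E.
      + destruct (C2 y (Ha' _ eq_refl)) as [U [HU Uy]]. exists U; split; auto; apply in_or_app; auto.
      + destruct (C1 y (Ha' _ eq_refl)) as [U [HU Uy]]. exists U; split; auto; apply in_or_app; auto. }
  set (p := fix p n := match n with O => kz | S n =>
        if excluded_middle_informative (~ good (ext (p n) n false) (S n))
        then ext (p n) n false else ext (p n) n true end).
  assert (Hbad : forall n, ~ good (p n) n).
  { induction n.
    - intros [l [Fl Cl]]. apply Hno. exists l; split; auto. intros y; apply Cl. intros k Hk; lia.
    - simpl. destruct excluded_middle_informative; auto.
      destruct (step _ _ IHn); tauto. }
  assert (Hag1 : forall n, agree n (p n) (p (S n))).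
  { intro n. simpl. destruct excluded_middle_informative; apply agree_ext. }
  assert (Hag : forall d n, agree n (p n) (p (n + d)%nat)).
  { induction d; intro n. rewrite Nat.add_0_r; intros k _; auto.
    eapply agree_trans; [apply IHd|]. replace (n + S d)%nat with (S (n + d)) by lia.
    eapply agree_mono; [|apply Hag1]. lia. }
  set (x := fun k => p (S k) k).
  assert (Hx : forall n, agree n (p n) x).
  { intros n k Hk. unfold x. replace n with (S k + (n - S k))%nat by lia.
    symmetry. apply (Hag _ (S k)). lia. }
  destruct (Hcov x) as [U [FU Ux]]. destruct (HF U FU x Ux) as [n Hn].
  apply (Hbad n). exists (U :: nil). split.
  - intros V [<-|[]]; auto.
  - intros y Hy. exists U; split; [left; auto|]. apply Hn. eapply agree_trans; [apply agree_sym, Hx|]. exact Hy.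
Qed.

Definition Gs (x : Kt) : Prop := exists N, forall k, (N <= k)%nat -> x k = false.
Lemma Gz : Gs kz. Proof. exists 0%nat; auto. Qed.
Lemma Gadd : forall x y, Gs x -> Gs y -> Gs (kadd x y).
Proof. intros x y [N HN] [M HM]. exists (Nat.max N M). intros k Hk. unfold kadd.
  rewrite HN, HM; auto; lia. Qed.
Lemma Gopp : forall x, Gs x -> Gs (kopp x). Proof. auto. Qed.

Lemma Gcount : countable_set Kt Gs.
Proof.
  exists (fun n k => Nat.testbit n k). intro x; split.
  - intros [N HN]. revert x HN. induction N; intros x HN.
    + exists 0%nat. apply functional_extensionality; intro k. rewrite HN; [|lia]. apply Nat.bits_0.
    + destruct (IHN (fun k => x (S k))) as [n Hn]. { intros k Hk; apply HN; lia. }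
      exists (if x 0%nat then 2 * n + 1 else 2 * n)%nat. apply functional_extensionality; intro k.
      destruct k.
      * destruct (x 0%nat) eqn:E; [apply Nat.testbit_odd_0|apply Nat.testbit_even_0].
      * assert (Nat.testbit n k = x (S k)) by (change (x (S k)) with ((fun k => x (S k)) k); rewrite <- Hn; auto).
        destruct (x 0%nat); [rewrite Nat.testbit_odd_succ|rewrite Nat.testbit_even_succ]; auto; lia.
  - intros [n <-]. exists n. intros k Hk. destruct n. apply Nat.bits_0.
    apply Nat.bits_above_log2. pose proof (Nat.log2_lt_lin (S n)). lia.
Qed.

Lemma Gdense : dense Kt copen Gs.
Proof.
  intros U HU [x Ux]. destruct (HU x Ux) as [n Hn].
  exists (fun k => if Nat.ltb k n then x k else false). split.
  - apply Hn. intros k Hk. destruct (Nat.ltb_spec k n); [auto|lia].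
  - exists n. intros k Hk. destruct (Nat.ltb_spec k n); [lia|auto].
Qed.

Definition Fm (x : Kt) : Kt := fun k => xorb (x k) (x (S k)).
Lemma FG x : Gs x -> Gs (Fm x).
Proof. intros [N HN]. exists N. intros k Hk. unfold Fm. rewrite !HN; auto. Qed.
Definition fsub (a : {x | Gs x}) : {x | Gs x} := exist Gs (Fm (proj1_sig a)) (FG _ (proj2_sig a)).

Fixpoint xs (y : Kt) (k L : nat) : bool :=
  match L with O => false | S L => xorb (y k) (xs y (S k) L) end.
Lemma xs_last y : forall L k, xs y k (S L) = xorb (xs y k L) (y (k + L)%nat).
Proof.
  induction L; intro k.
  - simpl. rewrite Nat.add_0_r. destruct (y k); reflexivity.
  - change (xs y k (S (S L))) with (xorb (y k) (xs y (S k) (S L))). rewrite IHL.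
    replace (S k + L)%nat with (k + S L)%nat by lia. simpl.
    destruct (y k), (xs y (S k) L), (y (k + S L)%nat); reflexivity.
Qed.

Lemma xs_zero y : forall L k, (forall j, (k <= j)%nat -> y j = false) -> xs y k L = false.
Proof. induction L; intros k H; simpl; auto. rewrite H, IHL; auto. intros; apply H; lia. Qed.

Lemma fm_en x n : Gs x -> Fm x = (fun k => Nat.eqb k n) -> x 0%nat = true.
Proof.
  intros [N HN] E. assert (H : forall k, xorb (x k) (x (S k)) = Nat.eqb k n).
  { intro k. change (Fm x k = Nat.eqb k n). rewrite E; reflexivity. }
  assert (Hd : forall d j, (n < j)%nat -> x j = x (j + d)%nat).
  { induction d; intros j Hj. rewrite Nat.add_0_r; auto.
    rewrite (IHd j Hj). specialize (H (j + d)%nat).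
    replace (j + S d)%nat with (S (j + d)) by lia.
    assert (Nat.eqb (j + d) n = false) by (apply Nat.eqb_neq; lia). rewrite H0 in H.
    destruct (x (j+d)%nat), (x (S (j+d))); simpl in *; congruence. }
  assert (x (S n) = false). { rewrite (Hd N (S n)) by lia. apply HN. lia. }
  assert (Hn : x n = true). { specialize (H n). rewrite Nat.eqb_refl, H0 in H. destruct (x n); simpl in *; congruence. }
  assert (forall m, (m <= n)%nat -> x (n - m)%nat = true).
  { induction m; intro Hm. rewrite Nat.sub_0_r; auto.
    specialize (H (n - S m)%nat). replace (S (n - S m)) with (n - m)%nat in H by lia.
    rewrite IHm in H by lia. assert (Nat.eqb (n - S m) n = false) by (apply Nat.eqb_neq; lia).
    rewrite H1 in H. destruct (x (n - S m)%nat); simpl in *; congruence. }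
  specialize (H1 n (le_n _)). rewrite Nat.sub_diag in H1. exact H1.
Qed.

Lemma not_rev : ~ g_reversible {x | Gs x} (sub_add Gs kadd Gadd) (subspace copen Gs).
Proof.
  intro H. specialize (H fsub).
  assert (Hbij : bijective_map _ fsub).
  { split.
    - intros [x Hx] [y Hy] E. apply subset_eq_compat. simpl.
      assert (E' : Fm x = Fm y) by (apply (f_equal (@proj1_sig _ _)) in E; exact E).
      destruct Hx as [N HN], Hy as [M HM].
      assert (Hs : forall m k, xorb (x k) (y k) = xorb (x (k + m)%nat) (y (k + m)%nat)).
      { induction m; intro k. rewrite Nat.add_0_r; auto.
        rewrite IHm. replace (k + S m)%nat with (S (k + m)) by lia.
        assert (Fm x (k+m)%nat = Fm y (k+m)%nat) by (rewrite E'; auto). unfold Fm in H0.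
        destruct (x (k+m)%nat), (y (k+m)%nat), (x (S (k+m))), (y (S (k+m))); simpl in *; congruence. }
      apply functional_extensionality; intro k. specialize (Hs (N + M)%nat k).
      rewrite (HN (k + (N+M))%nat), (HM (k + (N+M))%nat) in Hs by lia. destruct (x k), (y k); simpl in *; congruence.
    - intros [y Hy]. destruct Hy as [N HN].
      assert (Hx : Gs (fun k => xs y k N)).
      { exists N. intros k Hk. apply xs_zero. intros j Hj; apply HN; lia. }
      exists (exist Gs _ Hx). apply subset_eq_compat. simpl.
      apply functional_extensionality; intro k. unfold Fm.
      pose proof (xs_last y N k) as E1. rewrite (HN (k+N)%nat) in E1 by lia.
      simpl in E1. destruct (xs y k N), (y k), (xs y (S k) N); simpl in *; congruence. }
  assert (Hadd : additive_map _ (sub_add Gs kadd Gadd) fsub).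
  { intros [x Hx] [y Hy]. apply subset_eq_compat. simpl.
    apply functional_extensionality; intro k. unfold Fm, kadd.
    destruct (x k), (y k), (x (S k)), (y (S k)); reflexivity. }
  assert (Hcont : continuous_map _ (subspace copen Gs) fsub).
  { intros V [U [HU HV]]. exists (fun x => U (Fm x)). split.
    - intros x Ux. destruct (HU _ Ux) as [n Hn]. exists (S n). intros y Hy. apply Hn.
      intros k Hk. unfold Fm. rewrite (Hy k), (Hy (S k)) by lia. reflexivity.
    - intro a. rewrite HV. reflexivity. }
  specialize (H Hbij Hadd Hcont).
  set (V0 := fun a : {x | Gs x} => proj1_sig a 0%nat = false).
  assert (HV0 : subspace copen Gs V0).
  { exists (fun x : Kt => x 0%nat = false). split.
    - intros x Hx. exists 1%nat. intros y Hy. rewrite <- Hy; auto.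
    - intro a; reflexivity. }
  destruct (H V0 HV0) as [U [HU Hiff]].
  set (a0 := exist Gs kz Gz).
  assert (U kz).
  { apply (Hiff a0). exists a0. split; [reflexivity|]. apply subset_eq_compat. reflexivity. }
  destruct (HU _ H0) as [n Hn].
  set (en := fun k => Nat.eqb k n).
  assert (Gen : Gs en). { exists (S n). intros k Hk. unfold en. apply Nat.eqb_neq. lia. }
  assert (U en). { apply Hn. intros k Hk. unfold en, kz. symmetry; apply Nat.eqb_neq; lia. }
  apply (Hiff (exist Gs en Gen)) in H1. destruct H1 as [[x Hx] [Hv Hf]].
  apply (f_equal (@proj1_sig _ _)) in Hf. simpl in Hf. unfold V0 in Hv; simpl in Hv.
  rewrite (fm_en x n Hx Hf) in Hv. discriminate.
Qed.

Theorem mainTheorem16 :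
  exists (K : Type) (z : K) (add : K -> K -> K) (opp : K -> K)
         (op : (K -> Prop) -> Prop),
    is_topgroup K z add opp op /\ hausdorff K op /\ compact_space K op /\
    metrizable K op /\
    exists (G : K -> Prop) (Hz : G z)
           (Hadd : forall x y, G x -> G y -> G (add x y))
           (Hopp : forall x, G x -> G (opp x)),
      countable_set K G /\ dense K op G /\
      ~ g_reversible {x | G x} (sub_add G add Hadd) (subspace op G).
Proof.
  exists Kt, kz, kadd, kopp, copen.
  split; [exact topgroup|]. split; [exact haus|]. split; [exact compact|].
  split. { exists dist. split; [exact dist_metric|]. exact copen_metric. }
  exists Gs, Gz, Gadd, Gopp. split; [exact Gcount|]. split; [exact Gdense|]. exact not_rev.
Qed.
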